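(* Let $\mathfrak A=\langle A,f,g\rangle$ be a betweenness algebra. Then for all ultrafilters $\mathcal U,\mathcal U_1,\mathcal U_2,\mathcal U_3$ of $A$: (i) $Q_f(\mathcal U,\mathcal U,\mathcal U)$; (ii) $Q_f(\mathcal U_1,\mathcal U_2,\mathcal U_3)\Rightarrow Q_f(\mathcal U_3,\mathcal U_2,\mathcal U_1)$; (iii) $S_g(\mathcal U_1,\mathcal U_2,\mathcal U_3)\Rightarrow S_g(\mathcal U_3,\mathcal U_2,\mathcal U_1)$; (iv) $Q_f(\mathcal U_1,\mathcal U_2,\mathcal U_3)\Rightarrow Q_f(\mathcal U_1,\mathcal U_1,\mathcal U_2)$; (v) $Q_f(\mathcal U_1,\mathcal U_2,\mathcal U_3)\wedge S_g(\mathcal U_1,\mathcal U_3,\mathcal U_2)\Rightarrow \mathcal U_2=\mathcal U_3$. If $\mathfrak A$ is a strong betweenness algebra, then additionally $Q_f(\mathcal U_1,\mathcal U_1,\mathcal U_2)$ for all ultrafilters $\mathcal U_1,\mathcal U_2$. If $\mathfrak A$ is a weak betweenness algebra, then $S_g(\mathcal U_1,\mathcal U_2,\mathcal U_1)\Rightarrow\mathcal U_1=\mathcal U_2$ for all ultrafilters $\mathcal U_1,\mathcal U_2$.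
   Context: A PS-algebra is $\langle A,f,g\rangle$, $A$ a Boolean algebra with at least two elements (operations $+,\cdot,-,0,1$), $f,g\colon A^2\to A$, $f$ normal ($f(x,y)=0$ if $x=0$ or $y=0$) and additive in each argument, $g$ co-normal ($g(x,y)=1$ if $x=0$ or $y=0$) and co-additive in each argument ($g(x+x',y)=g(x,y)g(x',y)$, $g(x,y+y')=g(x,y)g(x,y')$). Axioms (for all $x,y,z,a,b$): (ABT0) $x\leq f(x,x)$; (ABT1$_f$) $f(x,y)\leq f(y,x)$; (ABT1$_g$) $g(x,y)\leq g(y,x)$; (ABT2) $y\cdot f(x,z)\leq f(x\cdot f(x,y),z)$; (ABT3) $f(x,g(x,-y)\cdot y)\leq y$; (wMIA) $x\neq0,y\neq0\Rightarrow g(x,y)\leq f(x,y)$; (ABTW) $a\neq0\Rightarrow g(a,a)\leq a$; (ABT2$^{\mathrm s}$) $b\neq0\Rightarrow a\leq f(a,b)$. Betweenness algebra: (ABT0),(ABT1$_f$),(ABT1$_g$),(ABT2),(ABT3),(wMIA). Weak betweenness algebra: (ABT0),(ABT1$_f$),(ABT1$_g$),(ABT2),(ABTW). Strong betweenness algebra: (ABT1$_f$),(ABT1$_g$),(ABT3),(wMIA),(ABT2$^{\mathrm s}$). On the ultrafilters of $A$: $Q_f(\mathcal U_1,\mathcal U_2,\mathcal U_3)\iff f[\mathcal U_1\times\mathcal U_3]\subseteq\mathcal U_2$ and $S_g(\mathcal U_1,\mathcal U_2,\mathcal U_3)\iff g[\mathcal U_1\times\mathcal U_3]\cap\mathcal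 U_2\neq\emptyset$. *)

(* Defs.v *)
(* A Boolean algebra is a ctbDistrLatticeType (complemented
   distributive lattice with top and bottom) from mathcomp's order library. *)
From mathcomp Require Import all_boot all_order.
Set Implicit Arguments. Unset Strict Implicit. Unset Printing Implicit Defensive.
Import Order.Theory.
Local Open Scope order_scope.

Section PS.
Context {disp : Order.disp_t} {A : ctbDistrLatticeType disp}.

Definition nontrivial : Prop := (\bot : A) != \top.

Definition normal (f : A -> A -> A) : Prop :=
  forall x y, (x = \bot \/ y = \bot) -> f x y = \bot.
Definition additive2 (f : A -> A -> A) : Prop :=
  (forall x x' y, f (x `|` x') y = f x y `|` f x' y) /\
  (forall x y y', f x (y `|` y') = f x y `|` f x y').
Definition conormal (g : A -> A -> A) : Prop :=
  forall x y, (x = \bot \/ y = \bot) -> g x y = \top.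
Definition coadditive2 (g : A -> A -> A) : Prop :=
  (forall x x' y, g (x `|` x') y = g x y `&` g x' y) /\
  (forall x y y', g x (y `|` y') = g x y `&` g x y').

Definition PS_algebra (f g : A -> A -> A) : Prop :=
  [/\ nontrivial, normal f, additive2 f, conormal g & coadditive2 g].

Definition ABT0 (f : A -> A -> A) := forall x, x <= f x x.
Definition ABT1f (f : A -> A -> A) := forall x y, f x y <= f y x.
Definition ABT1g (g : A -> A -> A) := forall x y, g x y <= g y x.
Definition ABT2 (f : A -> A -> A) :=
  forall x y z, y `&` f x z <= f (x `&` f x y) z.
Definition ABT3 (f g : A -> A -> A) :=
  forall x y, f x (g x (~` y) `&` y) <= y.
Definition wMIA (f g : A -> A -> A) :=
  forall x y, x != \bot -> y != \bot -> g x y <= f x y.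
Definition ABTW (g : A -> A -> A) := forall a, a != \bot -> g a a <= a.
Definition ABT2s (f : A -> A -> A) := forall a b, b != \bot -> a <= f a b.

Definition betweenness_algebra (f g : A -> A -> A) : Prop :=
  PS_algebra f g /\ ABT0 f /\ ABT1f f /\ ABT1g g /\ ABT2 f /\ ABT3 f g /\ wMIA f g.
Definition weak_betweenness_algebra (f g : A -> A -> A) : Prop :=
  PS_algebra f g /\ ABT0 f /\ ABT1f f /\ ABT1g g /\ ABT2 f /\ ABTW g.
Definition strong_betweenness_algebra (f g : A -> A -> A) : Prop :=
  PS_algebra f g /\ ABT1f f /\ ABT1g g /\ ABT3 f g /\ wMIA f g /\ ABT2s f.

Definition is_filter (U : A -> Prop) : Prop :=
  [/\ U \top,
      (forall x y, U x -> x <= y -> U y) &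
      (forall x y, U x -> U y -> U (x `&` y))].
Definition is_proper_filter (U : A -> Prop) : Prop :=
  is_filter U /\ ~ U \bot.
Definition is_ultrafilter (U : A -> Prop) : Prop :=
  is_proper_filter U /\
  (forall V : A -> Prop, is_proper_filter V -> (forall x, U x -> V x) -> V = U).

Definition Q_f (f : A -> A -> A) (U1 U2 U3 : A -> Prop) : Prop :=
  forall a b, U1 a -> U3 b -> U2 (f a b).
Definition S_g (g : A -> A -> A) (U1 U2 U3 : A -> Prop) : Prop :=
  exists a b, [/\ U1 a, U3 b & U2 (g a b)].

End PS.

(* Main.v *)
Require Import Defs.
From mathcomp Require Import all_boot all_order.
From Stdlib Require Import Classical.
Import Order.Theory.
Local Open Scope order_scope.

Section H.
Set Implicit Arguments.
Context {disp : Order.disp_t} {A : ctbDistrLatticeType disp}.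

Lemma uf_up {U : A -> Prop} {x y : A} : is_ultrafilter U -> U x -> x <= y -> U y.
Proof. by case=> [[[_ H _] _] _]; apply: H. Qed.

Lemma uf_meet {U : A -> Prop} {x y : A} : is_ultrafilter U -> U x -> U y -> U (x `&` y).
Proof. by case=> [[[_ _ H] _] _]; apply: H. Qed.

Lemma uf_top {U : A -> Prop} : is_ultrafilter U -> U \top.
Proof. by case=> [[[H _ _] _] _]. Qed.

Lemma uf_nbot {U : A -> Prop} : is_ultrafilter U -> U \bot -> False.
Proof. by case=> [[_ H] _]. Qed.

Lemma uf_ne {U : A -> Prop} {x : A} : is_ultrafilter U -> U x -> x != \bot.
Proof. by move=> HU Ux; apply/negP => /eqP E; move: Ux; rewrite E; exact: uf_nbot HU. Qed.

Lemma uf_notC {U : A -> Prop} {x : A} : is_ultrafilter U -> U x -> U (~` x) -> False.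
Proof.
move=> HU Ux Ucx; apply: (uf_nbot HU); rewrite -(meetxC x); exact: uf_meet.
Qed.

Lemma uf_C {U : A -> Prop} {x : A} : is_ultrafilter U -> ~ U x -> U (~` x).
Proof.
move=> HU nUx.
pose V := fun y => exists u, U u /\ u `&` x <= y.
have HV : is_filter V.
  split.
  - by exists \top; split; [exact: uf_top|rewrite lex1].
  - move=> a b [u [Uu Hu]] ab; exists u; split => //; exact: le_trans ab.
  - move=> a b [u [Uu Hu]] [v [Uv Hv]]; exists (u `&` v); split.
      exact: uf_meet.
    rewrite lexI; apply/andP; split.
      apply: le_trans Hu; apply: leI2 => //; exact: leIl.
    apply: le_trans Hv; apply: leI2 => //; exact: leIr.
case: (classic (V \bot)) => [[u [Uu Hu]]|nVb].
  apply: uf_up HU Uu _; rewrite -disj_leC; apply/eqP; apply/eqP.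
  by rewrite eq_le Hu le0x.
exfalso; apply: nUx.
have E : V = U.
  case: HU => _ Hmax; apply: Hmax; first by split.
  by move=> y Uy; exists y; split => //; exact: leIl.
rewrite -E; exists \top; split; [exact: uf_top|by rewrite meet1x].
Qed.

Lemma uf_eq {U V : A -> Prop} : is_ultrafilter U -> is_ultrafilter V ->
  (forall x, U x -> V x) -> V = U.
Proof. by move=> [_ HU] [HV _] sub; apply: HU. Qed.

End H.

Theorem lemma41 (disp : Order.disp_t) (A : ctbDistrLatticeType disp)
    (f g : A -> A -> A) :
  (betweenness_algebra f g ->
     (forall U, is_ultrafilter U -> Q_f f U U U) /\
     (forall U1 U2 U3, is_ultrafilter U1 -> is_ultrafilter U2 -> is_ultrafilter U3 ->
        Q_f f U1 U2 U3 -> Q_f f U3 U2 U1) /\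
     (forall U1 U2 U3, is_ultrafilter U1 -> is_ultrafilter U2 -> is_ultrafilter U3 ->
        S_g g U1 U2 U3 -> S_g g U3 U2 U1) /\
     (forall U1 U2 U3, is_ultrafilter U1 -> is_ultrafilter U2 -> is_ultrafilter U3 ->
        Q_f f U1 U2 U3 -> Q_f f U1 U1 U2) /\
     (forall U1 U2 U3, is_ultrafilter U1 -> is_ultrafilter U2 -> is_ultrafilter U3 ->
        Q_f f U1 U2 U3 -> S_g g U1 U3 U2 -> U2 = U3)) /\
  (strong_betweenness_algebra f g ->
     forall U1 U2, is_ultrafilter U1 -> is_ultrafilter U2 -> Q_f f U1 U1 U2) /\
  (weak_betweenness_algebra f g ->
     forall U1 U2, is_ultrafilter U1 -> is_ultrafilter U2 ->
       S_g g U1 U2 U1 -> U1 = U2).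
Proof.
have fmono1 : additive2 f -> forall x x' y, x <= x' -> f x y <= f x' y.
  move=> [Ha _] x x' y le; by rewrite -(join_r le) Ha leUl.
have fmono2 : additive2 f -> forall x y y', y <= y' -> f x y <= f x y'.
  move=> [_ Ha] x y y' le; by rewrite -(join_r le) Ha leUl.
have gan1 : coadditive2 g -> forall x x' y, x <= x' -> g x' y <= g x y.
  move=> [Ha _] x x' y le; by rewrite -(join_r le) Ha leIl.
have gan2 : coadditive2 g -> forall x y y', y <= y' -> g x y' <= g x y.
  move=> [_ Ha] x y y' le; by rewrite -(join_r le) Ha leIl.
split; [|split].
- move=> [[Hnt Hn Ha Hcn Hca] [H0 [H1f [H1g [H2 [H3 HW]]]]]].
  split; [|split; [|split; [|split]]].
  + move=> U HU a b Ua Ub.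
    apply: (uf_up HU (uf_meet HU Ua Ub)).
    apply: le_trans (H0 (a `&` b)) _.
    apply: le_trans (fmono1 Ha _ _ (a `&` b) (leIl a b)) _.
    exact: fmono2 Ha _ _ _ (leIr b a).
  + move=> U1 U2 U3 _ HU2 _ Q a b Ua Ub.
    exact: uf_up HU2 (Q _ _ Ub Ua) (H1f _ _).
  + move=> U1 U2 U3 _ HU2 _ [a [b [Ua Ub Ug]]].
    exists b, a; split => //; exact: uf_up HU2 Ug (H1g _ _).
  + move=> U1 U2 U3 HU1 HU2 HU3 Q a b Ua Ub.
    apply: NNPP => nU; have Uc := uf_C HU1 nU.
    set x := a `&` ~` f a b.
    have Ux : U1 x by exact: uf_meet.
    have Hb : U2 (b `&` f x \top) by apply: uf_meet HU2 Ub (Q _ _ Ux (uf_top HU3)).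
    have := uf_up HU2 Hb (H2 x b \top).
    have -> : x `&` f x b = \bot.
      apply/eqP; rewrite eq_le le0x andbT.
      apply: le_trans (leI2 (lexx x) (fmono1 Ha _ _ b (leIl a (~` f a b)))) _.
      by rewrite /x -meetA (meetC (~` _)) meetxC meetx0.
    by rewrite Hn; [exact: uf_nbot|left].
  + move=> U1 U2 U3 HU1 HU2 HU3 Q [a [b [Ua Ub Ug]]].
    have key : forall c, c <= b -> U2 c -> U3 c.
      move=> c cb Uc; apply: NNPP => nU3; have U3c := uf_C HU3 nU3.
      have Ug' : U3 (g a c `&` ~` c).
        exact: (uf_meet HU3 (uf_up HU3 Ug (gan2 Hca _ _ _ cb)) U3c).
      have := H3 a (~` c); rewrite complK => H3c.
      have Hc := uf_up HU2 (Q _ _ Ua Ug') H3c.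
      exact: uf_notC HU2 Uc Hc.
    symmetry; apply: (uf_eq HU2 HU3) => y Uy.
    apply: uf_up HU3 (key _ (leIl b y) (uf_meet HU2 Ub Uy)) (leIr y b).
- move=> [_ [_ [_ [_ [_ H2s]]]]] U1 U2 HU1 HU2 a b Ua Ub.
  exact: uf_up HU1 Ua (H2s _ _ (uf_ne HU2 Ub)).
- move=> [[Hnt Hn Ha Hcn Hca] [_ [_ [_ [_ HW]]]]] U1 U2 HU1 HU2 [a [b [Ua Ub Ug]]].
  symmetry; apply: (uf_eq HU1 HU2) => y Uy.
  set c := a `&` b `&` y.
  have Uc : U1 c by apply: uf_meet HU1 (uf_meet HU1 Ua Ub) Uy.
  have gcc : g a b <= g c c.
    have ca : c <= a by rewrite /c -meetA leIl.
    have cb : c <= b by rewrite /c meetAC leIr.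
    exact: le_trans (gan1 Hca c a b ca) (gan2 Hca c c b cb).
  have := uf_up HU2 (uf_up HU2 Ug gcc) (HW c (uf_ne HU1 Uc)).
  by move=> U2c; exact: (uf_up HU2 U2c (leIr y (a `&` b))).
Qed.
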